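(* Let $(P_n)_{n\in\mathbb{Z}}$ be the Padovan sequence. For every $a\in\mathbb{Z}$ let $\rho_a=3P_{a-2}-P_{a-4}$ and $\sigma_a=-\rho_{-a}$. Then for all integers $a,n$ with $a<n$, $$P_n=\rho_a P_{n-a}+\sigma_a P_{n-2a}+P_{n-3a}.$$
   Context: The Padovan sequence is defined by $P_0=P_1=P_2=1$ and $P_{n+3}=P_{n+1}+P_n$, extended to negative indices via $P_n=P_{n+3}-P_{n+1}$. *)

(* Defs.v *)
From Stdlib Require Import ZArith Lia.
Open Scope Z_scope.

(* Forward window: padF k = (P_k, P_{k+1}, P_{k+2}) for k : nat,
   using P_{n+3} = P_{n+1} + P_n. *)
Fixpoint padF (k : nat) : Z * Z * Z :=
  match k with
  | O => (1, 1, 1)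
  | S k' => let '(a, b, c) := padF k' in (b, c, a + b)
  end.

(* Backward window: padB k = (P_{-k}, P_{-k+1}, P_{-k+2}) for k : nat,
   using P_n = P_{n+3} - P_{n+1}. *)
Fixpoint padB (k : nat) : Z * Z * Z :=
  match k with
  | O => (1, 1, 1)
  | S k' => let '(a, b, c) := padB k' in (c - a, a, b)
  end.

Definition padovan (n : Z) : Z :=
  if 0 <=? n then fst (fst (padF (Z.to_nat n)))
  else fst (fst (padB (Z.to_nat (- n)))).

Definition rho (a : Z) : Z := 3 * padovan (a - 2) - padovan (a - 4).
Definition sigma (a : Z) : Z := - rho (- a).

Example padovan_ex : List.map padovan (-6 :: -5 :: -4 :: -3 :: -2 :: -1 :: 0 :: 1 :: 2 :: 3 :: 4 :: 5 :: 6 :: nil)%list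
  = (-1 :: 1 :: 0 :: 0 :: 1 :: 0 :: 1 :: 1 :: 1 :: 2 :: 2 :: 3 :: 4 :: nil)%list.
Proof. reflexivity. Qed.

(* Main.v *)
Require Import Defs.
From Stdlib Require Import ZArith.
Open Scope Z_scope.
From Stdlib Require Import Lia.

Lemma padB_spec : forall k : nat,
  padB k = (padovan (- Z.of_nat k), padovan (- Z.of_nat k + 1), padovan (- Z.of_nat k + 2)).
Proof.
  induction k as [|k IH].
  - reflexivity.
  - simpl padB. rewrite IH.
    assert (E1 : padovan (- Z.of_nat (S k)) =
                 padovan (- Z.of_nat k + 2) - padovan (- Z.of_nat k)).
    { unfold padovan at 1.
      replace (0 <=? - Z.of_nat (S k)) with false by (symmetry; apply Z.leb_gt; lia).
      replace (Z.to_nat (- - Z.of_nat (S k))) with (S k) by lia.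
      simpl padB. rewrite IH. reflexivity. }
    rewrite E1.
    replace (- Z.of_nat (S k) + 1) with (- Z.of_nat k) by lia.
    replace (- Z.of_nat (S k) + 2) with (- Z.of_nat k + 1) by lia.
    reflexivity.
Qed.

Lemma rec : forall n, padovan (n + 3) = padovan (n + 1) + padovan n.
Proof.
  intros n. destruct (Z_lt_le_dec n 0) as [Hn|Hn].
  - pose proof (padB_spec (Z.to_nat (- n - 1))) as H.
    replace (- Z.of_nat (Z.to_nat (- n - 1))) with (n + 1) in H by lia.
    replace (n + 1 + 1) with (n + 2) in H by lia.
    replace (n + 1 + 2) with (n + 3) in H by lia.
    unfold padovan at 3.
    replace (0 <=? n) with false by (symmetry; apply Z.leb_gt; lia).
    replace (Z.to_nat (- n)) with (S (Z.to_nat (- n - 1))) by lia.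
    simpl padB. rewrite H. simpl. ring.
  - unfold padovan.
    replace (0 <=? n + 3) with true by (symmetry; apply Z.leb_le; lia).
    replace (0 <=? n + 1) with true by (symmetry; apply Z.leb_le; lia).
    replace (0 <=? n) with true by (symmetry; apply Z.leb_le; lia).
    replace (Z.to_nat (n + 3)) with (S (S (S (Z.to_nat n)))) by lia.
    replace (Z.to_nat (n + 1)) with (S (Z.to_nat n)) by lia.
    simpl. destruct (padF (Z.to_nat n)) as [[x y] z]. simpl. ring.
Qed.

Lemma rec3 : forall x y z, y = x + 1 -> z = x + 3 -> padovan z = padovan y + padovan x.
Proof. intros x y z -> ->. apply rec. Qed.

Lemma uniq : forall (u : Z -> Z) n0, (forall n, u (n + 3) = u (n + 1) + u n) ->
  u n0 = 0 -> u (n0 + 1) = 0 -> u (n0 + 2) = 0 -> forall n, u n = 0.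
Proof.
  intros u n0 Hr H0 H1 H2.
  assert (Q : forall m, u (n0 + m) = 0 /\ u (n0 + m + 1) = 0 /\ u (n0 + m + 2) = 0).
  { apply Z.peano_ind.
    - rewrite Z.add_0_r. auto.
    - intros x [A [B C]].
      replace (n0 + Z.succ x) with (n0 + x + 1) by lia.
      replace (n0 + x + 1 + 1) with (n0 + x + 2) by lia.
      replace (n0 + x + 1 + 2) with (n0 + x + 3) by lia.
      rewrite Hr. lia.
    - intros x [A [B C]].
      replace (n0 + Z.pred x + 1) with (n0 + x) by lia.
      replace (n0 + Z.pred x + 2) with (n0 + x + 1) by lia.
      pose proof (Hr (n0 + Z.pred x)) as E.
      replace (n0 + Z.pred x + 3) with (n0 + x + 2) in E by lia.
      replace (n0 + Z.pred x + 1) with (n0 + x) in E by lia.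
      lia. }
  intros n. destruct (Q (n - n0)) as [A _].
  replace (n0 + (n - n0)) with n in A by lia. exact A.
Qed.

Ltac isPos p := lazymatch p with xH => idtac | xO ?p' => isPos p' | xI ?p' => isPos p' end.
Ltac isZnum v := lazymatch v with Z0 => idtac | Zpos ?p => isPos p | Zneg ?p => isPos p end.
Ltac evalP := repeat match goal with |- context [padovan ?c] =>
  let c' := eval vm_compute in c in isZnum c';
  let v := eval vm_compute in (padovan c') in change (padovan c) with v end.

Definition L p q r m := p * padovan (m - 5) + q * padovan (m - 3) + r * padovan (m - 4).
Definition L2 p q r m := p * L p q r (m - 5) + q * L p q r (m - 3) + r * L p q r (m - 4).
Definition L3 p q r m := p * L2 p q r (m - 5) + q * L2 p q r (m - 3) + r * L2 p q r (m - 4).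

Lemma AF : forall k m, padovan (k + m) = L (padovan k) (padovan (k + 1)) (padovan (k + 2)) m.
Proof.
  intros k m. unfold L.
  assert (Hr : forall n, (fun m => padovan (k + m) - (padovan k * padovan (m - 5) +
      padovan (k + 1) * padovan (m - 3) + padovan (k + 2) * padovan (m - 4))) (n + 3)
    = (fun m => padovan (k + m) - (padovan k * padovan (m - 5) +
      padovan (k + 1) * padovan (m - 3) + padovan (k + 2) * padovan (m - 4))) (n + 1)
    + (fun m => padovan (k + m) - (padovan k * padovan (m - 5) +
      padovan (k + 1) * padovan (m - 3) + padovan (k + 2) * padovan (m - 4))) n).
  { intros n. cbv beta.
    rewrite (rec3 (k + n) (k + (n + 1)) (k + (n + 3))) by ring.
    rewrite (rec3 (n - 5) (n + 1 - 5) (n + 3 - 5)) by ring.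
    rewrite (rec3 (n - 3) (n + 1 - 3) (n + 3 - 3)) by ring.
    rewrite (rec3 (n - 4) (n + 1 - 4) (n + 3 - 4)) by ring.
    ring. }
  pose proof (uniq _ 0 Hr) as U. cbv beta in U.
  rewrite !Z.add_0_r, !Z.add_0_l in U.
  specialize (U ltac:(evalP; ring) ltac:(evalP; ring) ltac:(evalP; ring) m).
  lia.
Qed.

Definition Ae p q r c o := p * padovan (c - 5 + o) + q * padovan (c - 3 + o) + r * padovan (c - 4 + o).
Definition det3 a b c d e f g h i := a*(e*i-f*h) - b*(d*i-f*g) + c*(d*h-e*g).
Definition D p q r := det3
  (Ae p q r 0 (-5)) (Ae p q r 0 (-3)) (Ae p q r 0 (-4))
  (Ae p q r 1 (-5)) (Ae p q r 1 (-3)) (Ae p q r 1 (-4))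
  (Ae p q r 2 (-5)) (Ae p q r 2 (-3)) (Ae p q r 2 (-4)).

Lemma Dstep : forall p q r, D q r (p + q) = D p q r.
Proof. intros. unfold D, det3, Ae. evalP. ring. Qed.

Lemma Dinv : forall a, D (padovan a) (padovan (a + 1)) (padovan (a + 2)) = 1.
Proof.
  apply Z.peano_ind.
  - vm_compute. reflexivity.
  - intros x IH. rewrite <- Dstep in IH.
    replace (Z.succ x) with (x + 1) by ring.
    replace (x + 1 + 1) with (x + 2) by ring.
    replace (x + 1 + 2) with (x + 3) by ring.
    rewrite rec. rewrite (Z.add_comm (padovan (x+1)) (padovan x)). exact IH.
  - intros x IH. etransitivity; [|exact IH].
    assert (Hx : x = Z.pred x + 1) by lia.
    set (y := Z.pred x) in *. clearbody y. subst x.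
    replace (y + 1 + 1) with (y + 2) by ring.
    replace (y + 1 + 2) with (y + 3) by ring.
    rewrite rec, (Z.add_comm (padovan (y + 1))), Dstep. reflexivity.
Qed.

Lemma adj_id : forall a b c d e f g h i x y z,
  let R0 := a*x+b*y+c*z in let R1 := d*x+e*y+f*z in let R2 := g*x+h*y+i*z in
  (e*i-f*h)*R0 - (b*i-c*h)*R1 + (b*f-c*e)*R2 = det3 a b c d e f g h i * x /\
  -(d*i-f*g)*R0 + (a*i-c*g)*R1 - (a*f-c*d)*R2 = det3 a b c d e f g h i * y /\
  (d*h-e*g)*R0 - (a*h-b*g)*R1 + (a*e-b*d)*R2 = det3 a b c d e f g h i * z.
Proof. intros. unfold R0, R1, R2, det3. repeat split; ring. Qed.

Lemma core : forall p q r s t v c, (c = 0 \/ c = 1 \/ c = 2) ->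
  D p q r = 1 ->
  padovan 0 = p * L s t v (0 - 5) + q * L s t v (0 - 3) + r * L s t v (0 - 4) ->
  padovan 1 = p * L s t v (1 - 5) + q * L s t v (1 - 3) + r * L s t v (1 - 4) ->
  padovan 2 = p * L s t v (2 - 5) + q * L s t v (2 - 3) + r * L s t v (2 - 4) ->
  L3 p q r c = (3 * L p q r (-2) - L p q r (-4)) * L2 p q r c
     + (- (3 * L s t v (-2) - L s t v (-4))) * L p q r c + padovan c.
Proof.
  intros p q r s t v c Hc HD H0 H1 H2.
  assert (R0 : Ae p q r 0 (-5) * s + Ae p q r 0 (-3) * t + Ae p q r 0 (-4) * v = 1).
  { transitivity (padovan 0); [| reflexivity]. rewrite H0. unfold L, Ae. evalP. ring. }
  assert (R1 : Ae p q r 1 (-5) * s + Ae p q r 1 (-3) * t + Ae p q r 1 (-4) * v = 1).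
  { transitivity (padovan 1); [| reflexivity]. rewrite H1. unfold L, Ae. evalP. ring. }
  assert (R2 : Ae p q r 2 (-5) * s + Ae p q r 2 (-3) * t + Ae p q r 2 (-4) * v = 1).
  { transitivity (padovan 2); [| reflexivity]. rewrite H2. unfold L, Ae. evalP. ring. }
  destruct (adj_id (Ae p q r 0 (-5)) (Ae p q r 0 (-3)) (Ae p q r 0 (-4))
     (Ae p q r 1 (-5)) (Ae p q r 1 (-3)) (Ae p q r 1 (-4))
     (Ae p q r 2 (-5)) (Ae p q r 2 (-3)) (Ae p q r 2 (-4)) s t v) as [Es [Et Ev]].
  cbv zeta in Es, Et, Ev.
  unfold D in HD. rewrite R0, R1, R2, HD, Z.mul_1_l in Es, Et, Ev.
  subst s t v. fold (D p q r) in HD.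
  assert (E : forall X Y, X - Y = padovan c * (D p q r - 1) -> X = Y) by (intros X Y; rewrite HD; lia).
  apply E. clear E H0 H1 H2 R0 R1 R2 HD.
  destruct Hc as [ -> | [ -> | -> ] ]; unfold L3, L2, L, D, det3, Ae; evalP; ring.
Qed.

Lemma LA2 : forall a m, padovan (a + (a + m)) = L2 (padovan a) (padovan (a + 1)) (padovan (a + 2)) m.
Proof.
  intros a m. rewrite (AF a (a + m)). unfold L at 1, L2.
  replace (a + m - 5) with (a + (m - 5)) by ring.
  replace (a + m - 3) with (a + (m - 3)) by ring.
  replace (a + m - 4) with (a + (m - 4)) by ring.
  rewrite (AF a (m - 5)), (AF a (m - 3)), (AF a (m - 4)). reflexivity.
Qed.

Lemma LA3 : forall a m, padovan (a + (a + (a + m))) = L3 (padovan a) (padovan (a + 1)) (padovan (a + 2)) m.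
Proof.
  intros a m. rewrite (AF a (a + (a + m))). unfold L at 1, L3.
  replace (a + (a + m) - 5) with (a + (a + (m - 5))) by ring.
  replace (a + (a + m) - 3) with (a + (a + (m - 3))) by ring.
  replace (a + (a + m) - 4) with (a + (a + (m - 4))) by ring.
  rewrite (LA2 a (m - 5)), (LA2 a (m - 3)), (LA2 a (m - 4)). reflexivity.
Qed.

Lemma Hc_gen : forall a c, padovan c =
  padovan a * L (padovan (-a)) (padovan (-a + 1)) (padovan (-a + 2)) (c - 5)
  + padovan (a + 1) * L (padovan (-a)) (padovan (-a + 1)) (padovan (-a + 2)) (c - 3)
  + padovan (a + 2) * L (padovan (-a)) (padovan (-a + 1)) (padovan (-a + 2)) (c - 4).
Proof.
  intros a c. replace c with (a + (-a + c)) at 1 by ring.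
  rewrite (AF a (-a + c)). unfold L at 1.
  replace (-a + c - 5) with (-a + (c - 5)) by ring.
  replace (-a + c - 3) with (-a + (c - 3)) by ring.
  replace (-a + c - 4) with (-a + (c - 4)) by ring.
  rewrite (AF (-a) (c - 5)), (AF (-a) (c - 3)), (AF (-a) (c - 4)). reflexivity.
Qed.

Theorem theorem3p1 : forall a n : Z, a < n ->
  padovan n = rho a * padovan (n - a) + sigma a * padovan (n - 2 * a) + padovan (n - 3 * a).
Proof.
  intros a n _.
  assert (Hrho : rho a = 3 * L (padovan a) (padovan (a + 1)) (padovan (a + 2)) (-2)
                      - L (padovan a) (padovan (a + 1)) (padovan (a + 2)) (-4)).
  { unfold rho. rewrite <- (AF a (-2)), <- (AF a (-4)).
    replace (a + -2) with (a - 2) by ring. replace (a + -4) with (a - 4) by ring. reflexivity. }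
  assert (Hsig : sigma a = - (3 * L (padovan (-a)) (padovan (-a + 1)) (padovan (-a + 2)) (-2)
                      - L (padovan (-a)) (padovan (-a + 1)) (padovan (-a + 2)) (-4))).
  { unfold sigma, rho. rewrite <- (AF (-a) (-2)), <- (AF (-a) (-4)).
    replace (-a + -2) with (-a - 2) by ring. replace (-a + -4) with (-a - 4) by ring. reflexivity. }
  set (u := fun m => padovan m - (rho a * padovan (m - a) + sigma a * padovan (m - 2 * a)
                     + padovan (m - 3 * a))).
  assert (Hr : forall m, u (m + 3) = u (m + 1) + u m).
  { intros m. unfold u.
    rewrite (rec3 m (m + 1) (m + 3)) by ring.
    rewrite (rec3 (m - a) (m + 1 - a) (m + 3 - a)) by ring.
    rewrite (rec3 (m - 2 * a) (m + 1 - 2 * a) (m + 3 - 2 * a)) by ring.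
    rewrite (rec3 (m - 3 * a) (m + 1 - 3 * a) (m + 3 - 3 * a)) by ring.
    ring. }
  assert (Hb : forall c, (c = 0 \/ c = 1 \/ c = 2) -> u (3 * a + c) = 0).
  { intros c Hc. unfold u.
    replace (3 * a + c) with (a + (a + (a + c))) by ring.
    replace (a + (a + (a + c)) - a) with (a + (a + c)) by ring.
    replace (a + (a + (a + c)) - 2 * a) with (a + c) by ring.
    replace (a + (a + (a + c)) - 3 * a) with c by ring.
    rewrite (LA3 a c), (LA2 a c), (AF a c), Hrho, Hsig.
    rewrite (core _ _ _ _ _ _ c Hc (Dinv a) (Hc_gen a 0) (Hc_gen a 1) (Hc_gen a 2)).
    ring. }
  pose proof (uniq u (3 * a) Hr (ltac:(rewrite <- (Z.add_0_r (3 * a)); apply Hb; auto))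
     (Hb 1 ltac:(auto)) (Hb 2 ltac:(auto)) n) as Hn.
  unfold u in Hn. lia.
Qed.
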